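(* Let $A\in\mathbb{R}^{n\times n}$, $B\in\mathbb{R}^{n\times m}$, let $N\geq n+m$, and for $i=1,\dots,N$ let $x_{i,1},x_{i,2}\in\mathbb{R}^{n}$, $u_{i,1}\in\mathbb{R}^{m}$ satisfy $x_{i,2}=Ax_{i,1}+Bu_{i,1}$. Put $X_{N,1}:=(x_{1,1},\dots,x_{N,1})^{\top}\in\mathbb{R}^{N\times n}$, $X_{N,2}:=(x_{1,2},\dots,x_{N,2})^{\top}\in\mathbb{R}^{N\times n}$, $U_{N,1}:=(u_{1,1},\dots,u_{N,1})^{\top}\in\mathbb{R}^{N\times m}$. Suppose $\operatorname{rank}\begin{pmatrix}X_{N,1} & U_{N,1}\end{pmatrix}=n+m$. Then the matrix equation $$X_{N,2}X_{N,1}^{\top}=X_{N,1}Z_{N,2}^{\top}+U_{N,1}Z_{B_{N,1}}$$ in the unknowns $(Z_{N,2},Z_{B_{N,1}})\in\mathbb{R}^{N\times n}\times\mathbb{R}^{m\times N}$ has a unique solution, namely $Z_{N,2}=X_{N,1}A$ and $Z_{B_{N,1}}=B^{\top}X_{N,1}^{\top}$. *)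

(* Defs.v *)
From HB Require Import structures.
From mathcomp Require Import all_boot all_order all_algebra.
From mathcomp Require Import reals.
Set Implicit Arguments. Unset Strict Implicit. Unset Printing Implicit Defensive.
Import Order.TTheory GRing.Theory Num.Theory.
Local Open Scope ring_scope.

Definition stack_rows (R : Type) (N k : nat) (x : 'I_N -> 'cV[R]_k) : 'M[R]_(N, k) :=
  \matrix_(i < N, j < k) x i j 0.

(* Main.v *)
Require Import Defs.
From HB Require Import structures.
From mathcomp Require Import all_boot all_order all_algebra.
From mathcomp Require Import reals.
Import Order.TTheory GRing.Theory Num.Theory.
Local Open Scope ring_scope.

Theorem lemma2 (R : realType) (n m N : nat)
  (A : 'M[R]_(n, n)) (B : 'M[R]_(n, m))
  (x1 x2 : 'I_N -> 'cV[R]_n) (u1 : 'I_N -> 'cV[R]_m) :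
  (n + m <= N)%N ->
  (forall i, x2 i = A *m x1 i + B *m u1 i) ->
  \rank (row_mx (stack_rows x1) (stack_rows u1)) = (n + m)%N ->
  forall (Z2 : 'M[R]_(N, n)) (ZB : 'M[R]_(m, N)),
    (stack_rows x2 *m (stack_rows x1)^T
       = stack_rows x1 *m Z2^T + stack_rows u1 *m ZB)
    <-> (Z2 = stack_rows x1 *m A /\ ZB = B^T *m (stack_rows x1)^T).
Proof.
move=> _ hx hrk Z2 ZB.
set X := stack_rows x1; set U := stack_rows u1.
have hX2 : stack_rows x2 = X *m A^T + U *m B^T.
  apply/matrixP => i j; rewrite !mxE hx !mxE; congr (_ + _);
  apply: eq_bigr => k _; rewrite !mxE; first [reflexivity | exact: mulrC].
have key : forall C : 'M[R]_(n + m, N), row_mx X U *m C = 0 -> C = 0.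
  move=> C HC.
  have /row_fullP [L HL] : row_full (row_mx X U) by rewrite /row_full hrk.
  by rewrite -(mul1mx C) -HL -mulmxA HC mulmx0.
split.
- move=> E.
  have := key (col_mx (A^T *m X^T - Z2^T) (B^T *m X^T - ZB)).
  rewrite mul_row_col !mulmxBr !mulmxA addrACA -mulmxDl -hX2 E -opprD subrr.
  move=> /(_ erefl) /eqP; rewrite col_mx_eq0 => /andP [/eqP h1 /eqP h2].
  split.
    move/eqP: h1; rewrite subr_eq0 => /eqP h1.
    by rewrite -[Z2]trmxK -h1 trmx_mul !trmxK.
  by move/eqP: h2; rewrite subr_eq0 => /eqP ->.
- move=> [-> ->].
  by rewrite hX2 mulmxDl -!mulmxA trmx_mul.
Qed.
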